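(* Let $t=t(n)$. If $t=o(\log n)$, then $$\lim_{n\to\infty}\frac{\log M_{K_{t,t}}(n)}{\binom{n}{2}}=1.$$ If $t=c\log n$ for some constant $c>0$, then $$\lim_{n\to\infty}\frac{\log M_{K_{t,t}}(n)}{\binom{n}{2}}\leq1-2^{-\frac{2}{c}}.$$
   Context: Logarithms are base 2. $K_{t,t}$ is the complete bipartite graph with both parts of size $t$. For graphs $G,G'$ on the same vertex set $[n]$, their symmetric difference $G\oplus G'$ is the graph on $[n]$ whose edge set consists of all edges belonging to exactly one of $G,G'$. For a graph $L$, $M_{L}(n)$ denotes the maximum possible size of a family $\mathcal{G}$ of graphs on vertex set $[n]$ such that for any two distinct $G,G'\in\mathcal{G}$, $G\oplus G'$ contains $L$ as a subgraph. *)

(* Defs.v *)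
From Stdlib Require Import Reals.
From Coquelicot Require Import Coquelicot.
From mathcomp Require Import all_boot.

Set Implicit Arguments.
Unset Strict Implicit.
Unset Printing Implicit Defensive.

Definition is_graph (n : nat) (G : {set {set 'I_n}}) : bool :=
  [forall e in G, #|e| == 2%N].

Definition symdiff (n : nat) (G G' : {set {set 'I_n}}) : {set {set 'I_n}} :=
  (G :\: G') :|: (G' :\: G).

Definition contains_subgraph (m n : nat) (L : {set {set 'I_m}})
    (G : {set {set 'I_n}}) : bool :=
  [exists f : {ffun 'I_m -> 'I_n}, injectiveb f && [forall e in L, f @: e \in G]].

Definition Ktt (t : nat) : {set {set 'I_(t + t)}} :=
  [set [set lshift t i; rshift t j] | i : 'I_t, j : 'I_t].

Definition admissible (m n : nat) (L : {set {set 'I_m}})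
    (F : {set {set {set 'I_n}}}) : bool :=
  [forall G in F, is_graph G] &&
  [forall G in F, forall G' in F, (G != G') ==> contains_subgraph L (symdiff G G')].

Definition M (m : nat) (L : {set {set 'I_m}}) (n : nat) : nat :=
  \max_(F : {set {set {set 'I_n}}} | admissible L F) #|F|.

Definition log2 (x : R) : R := (ln x / ln 2)%R.

Definition ratio (t : nat -> nat) (n : nat) : R :=
  (log2 (INR (M (Ktt (t n)) n)) / INR 'C(n, 2))%R.

(* Main.v *)
Require Import Defs.
From Stdlib Require Import Reals.
From Coquelicot Require Import Coquelicot.
From mathcomp Require Import all_boot.
From mathcomp Require Import zify.
From Stdlib Require Import Lra Psatz.

Set Implicit Arguments.
Unset Strict Implicit.
Unset Printing Implicit Defensive.
Open Scope nat_scope.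

Lemma sum_in_card (T : finType) (B : {set T}) : \sum_(x : T) ((x \in B) : nat) = #|B|.
Proof. rewrite -sum1_card [RHS]big_mkcond /=; apply: eq_bigr => x _; by case: (x \in B). Qed.

Lemma card_cover (T I : finType) (A : {set T}) (P : pred I) (F : I -> {set T}) :
  (forall x, x \in A -> exists2 i, P i & x \in F i) -> #|A| <= \sum_(i | P i) #|F i|.
Proof.
move=> H; rewrite -sum1_card.
apply: (@leq_trans (\sum_(x in A) \sum_(i | P i) ((x \in F i) : nat))).
  apply: leq_sum => x xA; have [i Pi xF] := H x xA.
  by rewrite (bigD1 i) //= xF leq_addr.
rewrite exchange_big /=; apply: leq_sum => i _.
rewrite -sum_in_card big_mkcond /=; apply: leq_sum => x _; by case: (x \in A).
Qed.

Section Comb.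
Variable n : nat.
Notation V := 'I_n.
Definition E2 : {set {set V}} := [set e : {set V} | #|e| == 2].

Lemma card_E2 : #|E2| = 'C(n, 2).
Proof. by rewrite card_draws card_ord. Qed.

Lemma is_graphE (G : {set {set V}}) : is_graph G = (G \subset E2).
Proof.
apply/forall_inP/subsetP => H e He; first by rewrite inE; exact: H.
by have := H e He; rewrite inE.
Qed.

Lemma symdiffC (G G' : {set {set V}}) : symdiff G G' = symdiff G' G.
Proof. by rewrite /symdiff setUC. Qed.

Lemma symdiffK (G H : {set {set V}}) : symdiff G (symdiff G H) = H.
Proof. apply/setP => x; rewrite !inE; by case: (x \in G); case: (x \in H). Qed.

Lemma symdiff0 (H : {set {set V}}) : symdiff H set0 = H.
Proof. apply/setP => x; rewrite !inE; by case: (x \in H). Qed.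

Lemma symdiff_sub (A G H : {set {set V}}) : G \subset A -> H \subset A -> symdiff G H \subset A.
Proof.
move=> /subsetP sG /subsetP sH; apply/subsetP => x; rewrite !inE.
by case/orP => /andP [_ xi]; [apply: sG | apply: sH].
Qed.

Lemma contains_mono m (L : {set {set 'I_m}}) (G G' : {set {set V}}) :
  G \subset G' -> contains_subgraph L G -> contains_subgraph L G'.
Proof.
move=> /subsetP sGG' /existsP [f /andP [inj /forall_inP H]]; apply/existsP; exists f.
rewrite inj /=; apply/forall_inP => e /H; exact: sGG'.
Qed.

Section MFacts.
Variables (m : nat) (L : {set {set 'I_m}}).

Lemma M_ge (F : {set {set {set V}}}) : admissible L F -> #|F| <= M L n.
Proof. move=> aF; exact: (@leq_bigmax_cond _ (fun F => admissible L F) (fun F => #|F|)). Qed.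

Lemma M_le k : (forall F : {set {set {set V}}}, admissible L F -> #|F| <= k) -> M L n <= k.
Proof. move=> H; exact/bigmax_leqP. Qed.

Lemma adm0 : admissible L (set0 : {set {set {set V}}}).
Proof. by apply/andP; split; apply/forall_inP => G; rewrite inE. Qed.

Lemma M_attained : exists2 F : {set {set {set V}}}, admissible L F & (forall F' : {set {set {set V}}}, admissible L F' -> #|F'| <= #|F|).
Proof.
case: (arg_maxnP (fun F : {set {set {set V}}} => #|F|) (adm0)) => F aF maxF.
by exists F.
Qed.

Lemma M_le_pow : M L n <= 2 ^ 'C(n, 2).
Proof.
apply: M_le => F /andP [/forall_inP gF _].
rewrite -card_E2 -card_powerset; apply: subset_leq_card; apply/subsetP => G GF.
by rewrite inE -is_graphE; apply: gF.
Qed.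

Lemma M_upper (D0 : {set {set V}}) : D0 \subset E2 -> ~~ contains_subgraph L D0 ->
  M L n <= 2 ^ ('C(n, 2) - #|D0|).
Proof.
move=> sD0 nc; apply: M_le => F /andP [/forall_inP gF /forall_inP adm].
have inj : {in F &, injective (fun G => G :\: D0)}.
  move=> G G' GF G'F eq; apply/eqP; apply/negPn/negP => neq.
  have := adm G GF => /forall_inP /(_ G' G'F) /implyP /(_ neq) c.
  apply: (negP nc); apply: contains_mono c.
  apply/subsetP=> x; rewrite /symdiff !inE => /orP [/andP [nx gx] | /andP[nx gx]];
    apply/negPn/negP => xD.
    have : x \in G :\: D0 by rewrite inE xD gx.
    by rewrite eq inE (negbTE nx) andbF.
  have : x \in G' :\: D0 by rewrite inE xD gx.
  by rewrite -eq inE (negbTE nx) andbF.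
rewrite -(card_in_imset inj).
apply: (@leq_trans #|powerset (E2 :\: D0)|).
  apply: subset_leq_card; apply/subsetP => y /imsetP [G GF ->].
  rewrite inE; apply: setSD; rewrite -is_graphE; exact: gF.
by rewrite card_powerset cardsD (setIidPr sD0) card_E2.
Qed.

End MFacts.
End Comb.
Section Greedy.
Variable n : nat.
Notation V := 'I_n.
Variables (m : nat) (L : {set {set 'I_m}}).

Definition Bset : {set {set {set V}}} :=
  [set D : {set {set V}} | (D \subset E2 n) && ((D == set0) || ~~ contains_subgraph L D)].

Lemma greedy : 2 ^ 'C(n, 2) <= M L n * #|Bset|.
Proof.
have [F aF maxF] := M_attained n L.
have -> : M L n = #|F|.
  apply/eqP; rewrite eqn_leq M_ge // andbT; exact: M_le.
rewrite -card_E2 -card_powerset -sum_nat_const.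
apply: (@leq_trans (\sum_(G in F) #|[set symdiff G D | D in Bset]|)); last first.
  by apply: leq_sum => G _; apply: leq_imset_card.
apply: card_cover => H; rewrite inE => sH.
case HF: (H \in F).
  exists H => //; apply/imsetP; exists set0; last by rewrite symdiff0.
  by rewrite inE sub0set eqxx.
case: (boolP [exists G in F, ~~ contains_subgraph L (symdiff G H)]).
  move=> /exists_inP [G GF nc]; exists G => //; apply/imsetP; exists (symdiff G H);
    last by rewrite symdiffK.
  move: aF => /andP [/forall_inP gF _].
  rewrite inE nc orbT andbT; apply: symdiff_sub => //; rewrite -is_graphE; exact: gF.
move=> /exists_inP nex; exfalso.
have allc : forall G, G \in F -> contains_subgraph L (symdiff G H).
  move=> G GF; case: (boolP (contains_subgraph L (symdiff G H))) => // nc.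
  by exfalso; apply: nex; exists G.
have : admissible L (H |: F).
  move: aF => /andP [/forall_inP gF /forall_inP adm].
  apply/andP; split.
    apply/forall_inP => G; rewrite !inE => /orP [/eqP -> | /gF //]; by rewrite is_graphE.
  apply/forall_inP => G1; rewrite !inE => /orP [/eqP -> | G1F];
    apply/forall_inP => G2; rewrite !inE => /orP [/eqP -> | G2F]; apply/implyP => neq.
  - by rewrite eqxx in neq.
  - by rewrite symdiffC; apply: allc.
  - by apply: allc.
  - by have := adm G1 G1F => /forall_inP /(_ G2 G2F) /implyP /(_ neq).
move=> /maxF; by rewrite cardsU1 HF ltnn.
Qed.

End Greedy.

Lemma card_small_subsets (T : finType) (A : {set T}) (k q : nat) : 0 < q -> k <= #|A| ->
  #|[set D : {set T} | (D \subset A) && (#|D| <= k)]| * q ^ (#|A| - k) <= q.+1 ^ #|A|.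
Proof.
move=> q0 kA.
have -> : #|[set D : {set T} | (D \subset A) && (#|D| <= k)]| = \sum_(i < k.+1) 'C(#|A|, i).
  rewrite -sum1_card (partition_big (fun D : {set T} => inord #|D| : 'I_k.+1) predT) //=.
  apply: eq_bigr => i _; rewrite -(cards_draws A i) -sum1_card; apply: eq_bigl => D.
  rewrite !inE; case: (D \subset A) => //=.
  case: (leqP #|D| k) => h /=; first by rewrite -val_eqE /= inordK.
  by apply/esym/negP => /eqP E; have := ltn_ord i; lia.
rewrite big_distrl /= -[q.+1]addn1 expnDn.
apply: (@leq_trans (\sum_(i < k.+1) 'C(#|A|, i) * (q ^ (#|A| - i) * 1 ^ i))).
  apply: leq_sum => i _; rewrite exp1n muln1 leq_mul2l; apply/orP; right.
  have := ltn_ord i => ik.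
  by apply: leq_pexp2l => //; lia.
rewrite (@big_ord_widen _ _ _ k.+1 #|A|.+1 (fun i => 'C(#|A|, i) * (q ^ (#|A| - i) * 1 ^ i))) //.
rewrite [X in X <= _]big_mkcond /=; apply: leq_sum => i _; by case: (i < k.+1).
Qed.
Section Embed.
Variable n : nat.
Notation V := 'I_n.

Lemma Ktt_mem t e : e \in Ktt t -> exists i j, e = [set lshift t i; rshift t j].
Proof. by case/imset2P => i j _ _ ->; exists i, j. Qed.

Lemma embed (D : {set {set V}}) t (S T : {set V}) (hS : t <= #|S|) (hT : t <= #|T|) :
  D \subset E2 n ->
  (forall v u, v \in T -> u \in S -> [set v; u] \in D) -> contains_subgraph (Ktt t) D.
Proof.
move=> sD HD.
pose g (k : 'I_(t + t)) : V := match split k with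
  | inl i => enum_val (widen_ord hT i) | inr j => enum_val (widen_ord hS j) end.
have gl i : g (lshift t i) = enum_val (widen_ord hT i).
  by rewrite /g (unsplitK (inl _ i)).
have gr j : g (rshift t j) = enum_val (widen_ord hS j).
  by rewrite /g (unsplitK (inr _ j)).
have noloop x : x \in T -> x \in S -> False.
  move=> xT xS; have := HD x x xT xS; rewrite setUid => /(subsetP sD).
  by rewrite inE cards1.
apply/existsP; exists [ffun k => g k]; apply/andP; split.
  apply/injectiveP => k1 k2; rewrite !ffunE.
  case: (split_ordP k1) => [i1 ->|j1 ->]; case: (split_ordP k2) => [i2 ->|j2 ->];
    rewrite ?gl ?gr.
  - by move/enum_val_inj/(congr1 val) => /= E; congr lshift; apply: val_inj.
  - move=> E; exfalso; apply: (noloop (enum_val (widen_ord hT i1))).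
      exact: enum_valP.
    rewrite E; exact: enum_valP.
  - move=> E; exfalso; apply: (noloop (enum_val (widen_ord hT i2))).
      exact: enum_valP.
    rewrite -E; exact: enum_valP.
  - by move/enum_val_inj/(congr1 val) => /= E; congr rshift; apply: val_inj.
apply/forall_inP => e /Ktt_mem [i [j ->]].
rewrite imsetU1 imset_set1 !ffunE gl gr; apply: HD; exact: enum_valP.
Qed.

End Embed.
Section KST.
Variable n : nat.
Notation V := 'I_n.
Variable D : {set {set V}}.
Hypothesis sD : D \subset E2 n.

Definition Nb (v : V) : {set V} := [set u | [set v; u] \in D].

Lemma sum_cond_card (T : finType) (A : {pred T}) (P : pred T) :
  \sum_(x in A) (P x : nat) = #|[set x | (x \in A) && P x]|.
Proof.
rewrite -sum_in_card [LHS]big_mkcond /=; apply: eq_bigr => x _; rewrite !inE.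
by case: (x \in A); case: (P x).
Qed.

Lemma handshake : 2 * #|D| <= \sum_v #|Nb v|.
Proof.
have -> : 2 * #|D| = \sum_(e in D) #|e|.
  rewrite mulnC -sum_nat_const; apply: eq_bigr => e eD.
  by have := subsetP sD e eD; rewrite inE => /eqP.
rewrite (eq_bigr (fun e : {set V} => \sum_(v : V) ((v \in e) : nat))); last by move=> e _; rewrite sum_in_card.
rewrite exchange_big /=; apply: leq_sum => v _.
rewrite sum_cond_card.
apply: (@leq_trans #|[set [set v; u] | u in Nb v]|); last exact: leq_imset_card.
apply: subset_leq_card; apply/subsetP => e; rewrite inE => /andP [eD ve].
have := subsetP sD e eD; rewrite inE => /cards2P [x [y [xy exy]]].
move: ve; rewrite exy !inE => /orP [/eqP vx | /eqP vy]; subst.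
  by apply/imsetP; exists y; rewrite // inE.
apply/imsetP; exists x; last by rewrite setUC.
by rewrite inE setUC.
Qed.

Definition common (S : {set V}) : {set V} := [set v | S \subset Nb v].

Lemma sum_bin_nb t :
  \sum_v 'C(#|Nb v|, t) = \sum_(S : {set V} | #|S| == t) #|common S|.
Proof.
rewrite (eq_bigr (fun v => \sum_(S : {set V}) (((S \subset Nb v) && (#|S| == t)) : nat))); last first.
  by move=> v _; rewrite -cards_draws -sum_in_card; apply: eq_bigr => S _; rewrite inE.
rewrite exchange_big /= [RHS]big_mkcond /=; apply: eq_bigr => S _.
case: (#|S| == t).
  by rewrite -sum_in_card; apply: eq_bigr => v _; rewrite inE andbT.
by rewrite big1 // => v _; rewrite andbF.
Qed.

Lemma free_common t (S : {set V}) : ~~ contains_subgraph (Ktt t) D -> #|S| = t -> #|common S| < t.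
Proof.
move=> nc St; rewrite ltnNge; apply/negP => tC; apply: (negP nc).
apply: (@embed n D t S (common S)) => //; first by rewrite St.
move=> v u; rewrite inE => /subsetP H /H; by rewrite inE.
Qed.

Lemma sum_bin_le t : ~~ contains_subgraph (Ktt t) D -> \sum_v 'C(#|Nb v|, t) <= t * 'C(n, t).
Proof.
move=> nc; rewrite sum_bin_nb.
apply: (@leq_trans (\sum_(S : {set V} | #|S| == t) t)).
  apply: leq_sum => S /eqP St; apply: ltnW; exact: free_common.
rewrite -[X in _ <= t * 'C(X, t)]card_ord -card_draws -sum1_card.
rewrite (big_morph (fun x => t * x) (fun a b => mulnDr t a b) (muln0 t)).
by apply: eq_leq; apply: eq_big => S; rewrite ?inE ?muln1.
Qed.

Lemma sum_bin_ge t d : #|[set v | d <= #|Nb v|]| * 'C(d, t) <= \sum_v 'C(#|Nb v|, t).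
Proof.
rewrite (bigID (fun v => d <= #|Nb v|)) /=.
apply: leq_trans (leq_addr _ _).
rewrite -sum_nat_const.
rewrite [X in X <= _](eq_bigl (fun v => d <= #|Nb v|)); last by move=> v; rewrite inE.
by apply: leq_sum => v h; apply: leq_bin2l.
Qed.

Lemma sum_deg_le d : \sum_v #|Nb v| <= #|[set v | d <= #|Nb v|]| * n + n * d.
Proof.
rewrite (bigID (fun v => d <= #|Nb v|)) /=; apply: leq_add.
  rewrite -sum_nat_const.
  rewrite [X in _ <= X](eq_bigl (fun v => d <= #|Nb v|)); last by move=> v; rewrite inE.
  apply: leq_sum => v _; rewrite -[X in _ <= X]card_ord; apply: max_card.
apply: (@leq_trans (\sum_(v : V) d)).
  rewrite [X in _ <= X](bigID (fun v => d <= #|Nb v|)) /=.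
  apply: leq_trans (leq_addl _ _); apply: leq_sum => v; rewrite -ltnNge; exact: ltnW.
by rewrite sum_nat_const card_ord.
Qed.

End KST.
Lemma pow_le_ffact d t : (d - t) ^ t <= d ^_ t.
Proof.
suff H : forall i, i <= t -> (d - t) ^ i <= d ^_ i by exact: H.
elim=> [|i IH] it; first by rewrite ffactn0 expn0.
rewrite expnSr ffactnSr; apply: leq_mul; first by apply: IH; lia.
lia.
Qed.

Lemma ffact_le_pow m t : m ^_ t <= m ^ t.
Proof.
elim: t => [|t IH]; first by rewrite ffactn0 expn0.
by rewrite expnSr ffactnSr; apply: leq_mul => //; apply: leq_subr.
Qed.

Lemma bin2_double m : 2 * 'C(m, 2) = m * m.-1.
Proof. by rewrite -(mul_bin_diag m 1) bin1. Qed.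

Lemma kst_arith (n t r E H d S1 : nat) : 0 < r -> 4 * r * (t + 1) <= n ->
  2 * r * t * (4 * r) ^ t < n -> d = n %/ (2 * r) -> 2 * E <= S1 ->
  S1 <= H * n + n * d -> H * 'C(d, t) <= t * 'C(n, t) -> E * r <= 'C(n, 2).
Proof.
move=> r0 h1 h2 hd hS1 hS2 hb.
rewrite leqNgt; apply/negP => hE.
have n0 : 0 < n by lia.
have e1 : n * n.-1 < r * S1.
  rewrite -bin2_double.
  apply: (@leq_trans (2 * (E * r))); first by rewrite ltn_pmul2l.
  rewrite mulnA mulnC; rewrite leq_pmul2l //.
have e2 : n <= r * H + r * d.
  have : n * n.-1 < n * (r * H + r * d).
    apply: (leq_trans e1); apply: (@leq_trans (r * (H * n + n * d))).
      by rewrite leq_pmul2l.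
    apply: eq_leq; nia.
  rewrite ltn_pmul2l //; lia.
have e3 : d * (2 * r) <= n by rewrite hd; apply: leq_divM.
have e4 : n <= 2 * r * H by nia.
have e5 : n < (d + 1) * (2 * r).
  have := divn_eq n (2 * r); have := ltn_pmod n (_ : 0 < 2 * r); rewrite -hd; nia.
have e6 : n <= (d - t) * (4 * r).
  have dt : t <= d by nia.
  have : (d - t) * (4 * r) = 2 * (d * (2 * r)) - 4 * r * t.
    rewrite mulnBl; nia.
  move=> ->; nia.
have e7 : H * (d - t) ^ t <= t * n ^ t.
  have : H * 'C(d, t) * t`! <= t * 'C(n, t) * t`! by rewrite leq_mul2r hb orbT.
  rewrite -!mulnA !bin_ffact => h.
  apply: (leq_trans _ (leq_trans h _)).
    by rewrite leq_mul2l pow_le_ffact orbT.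
  by rewrite leq_mul2l ffact_le_pow orbT.
have e8 : H * n ^ t <= t * (4 * r) ^ t * n ^ t.
  apply: (@leq_trans (H * ((d - t) * (4 * r)) ^ t)).
    rewrite leq_mul2l; apply/orP; right.
    case: t {h1 h2 hb e7 e6} (e6) => [|t] h; first by rewrite !expn0.
    by rewrite leq_exp2r.
  rewrite expnMn mulnA; apply: (@leq_trans (t * n ^ t * (4 * r) ^ t)).
    by rewrite leq_mul2r e7 orbT.
  by rewrite mulnAC.
have e9 : H <= t * (4 * r) ^ t.
  by move: e8; rewrite leq_pmul2r // expn_gt0 n0.
have : n <= 2 * r * (t * (4 * r) ^ t).
  apply: (leq_trans e4); by rewrite leq_mul2l e9 orbT.
rewrite mulnA; lia.
Qed.
Lemma kst n (D : {set {set 'I_n}}) t r : D \subset E2 n -> ~~ contains_subgraph (Ktt t) D ->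
  0 < r -> 4 * r * (t + 1) <= n -> 2 * r * t * (4 * r) ^ t < n -> #|D| * r <= 'C(n, 2).
Proof.
move=> sD nc r0 h1 h2.
apply: (kst_arith r0 h1 h2 (erefl _) (handshake sD) (sum_deg_le D (n %/ (2 * r)))).
exact: leq_trans (sum_bin_ge D t _) (sum_bin_le sD nc).
Qed.

Lemma part1_nat n t a j : 4 * 2 ^ a * (t + 1) <= n -> 2 * 2 ^ a * t * (4 * 2 ^ a) ^ t < n ->
  2 ^ 'C(n, 2) * (2 ^ j) ^ ('C(n, 2) - 'C(n, 2) %/ 2 ^ a) <= M (Ktt t) n * (2 ^ j).+1 ^ 'C(n, 2).
Proof.
move=> h1 h2.
have hB : #|Bset n (Ktt t)| * (2 ^ j) ^ ('C(n, 2) - 'C(n, 2) %/ 2 ^ a) <= (2 ^ j).+1 ^ 'C(n, 2).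
  rewrite -card_E2.
  have cs := @card_small_subsets _ (E2 n) (#|E2 n| %/ 2 ^ a) (2 ^ j) (ltac:(by rewrite expn_gt0)) (leq_div _ _).
  apply: leq_trans cs.
  rewrite leq_mul2r; apply/orP; right; apply: subset_leq_card; apply/subsetP => D.
  rewrite !inE => /andP [sD /orP [/eqP -> | nc]]; rewrite ?sD //= ?sub0set ?cards0 //.
  rewrite leq_divRL ?expn_gt0 // card_E2.
  by apply: (@kst n D t (2 ^ a)) => //; rewrite expn_gt0.
apply: (leq_trans _ (leq_trans (leq_mul (leqnn (M (Ktt t) n)) hB) _)).
  by rewrite mulnA leq_mul2r greedy orbT.
by [].
Qed.
Lemma card_Ktt t : #|Ktt t| = t * t.
Proof.
pose g (p : 'I_t * 'I_t) : {set 'I_(t + t)} := [set lshift t p.1; rshift t p.2].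
have -> : Ktt t = [set g p | p in [set: 'I_t * 'I_t]].
  apply/setP => e; apply/imset2P/imsetP.
    by case=> i j _ _ ->; exists (i, j); rewrite ?inE.
  by case=> [[i j]] _ ->; exists i j; rewrite ?inE.
rewrite card_imset; first by rewrite cardsT card_prod card_ord.
move=> [i j] [i' j']; rewrite /g /= => E.
have : lshift t i \in [set lshift t i'; rshift t j'] by rewrite -E !inE eqxx.
have : rshift t j \in [set lshift t i'; rshift t j'] by rewrite -E !inE eqxx orbT.
rewrite !inE !eq_shift /= orbF => /eqP -> /eqP ->; done.
Qed.

Lemma bin_ffact_shift s : forall N mm, s <= mm -> mm <= N ->
  'C(N, mm) * mm ^_ s = 'C(N - s, mm - s) * N ^_ s.
Proof.
elim: s => [|s IH] N mm smm mmN; first by rewrite !ffactn0 !subn0.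
case: mm smm mmN => [//|mm] smm mmN; case: N mmN => [//|N] mmN.
rewrite !ffactnS /= !subSS mulnA [_ * mm.+1]mulnC -mul_bin_diag /= -mulnA IH //.
by rewrite mulnCA.
Qed.

Lemma ffact_ratio mm N s : mm <= N -> mm ^_ s * N ^ s <= N ^_ s * mm ^ s.
Proof.
move=> mN; elim: s => [|s IH]; first by rewrite !ffactn0 !expn0.
rewrite !ffactnSr !expnSr.
have h : (mm - s) * N <= (N - s) * mm.
  rewrite !mulnBl mulnC; apply: leq_sub2l; rewrite leq_mul2l mN orbT //.
by move: (leq_mul IH h); rewrite mulnACA [X in _ <= X]mulnACA.
Qed.

Lemma binom_ineq n t mm N : 0 < t -> t * t <= mm -> mm <= N -> n ^ 2 * mm ^ t < N ^ t ->
  n ^ (t + t) * 'C(N - t * t, mm - t * t) < 'C(N, mm).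
Proof.
move=> t0 smm mmN h.
set s := t * t.
have sN : s <= N by apply: leq_trans mmN.
have fN : 0 < N ^_ s by rewrite ffact_gt0.
have N0 : 0 < N by apply: leq_trans (leq_trans smm mmN); rewrite /s muln_gt0 t0.
have C0 : 0 < 'C(N, mm) by rewrite bin_gt0.
rewrite -(ltn_pmul2r fN) -mulnA -bin_ffact_shift // mulnCA ltn_pmul2l //.
have key : n ^ (t + t) * mm ^ s < N ^ s.
  have -> : n ^ (t + t) = (n ^ 2) ^ t by rewrite -expnM mul2n addnn.
  by rewrite /s !expnM -expnMn ltn_exp2r.
rewrite -(ltn_pmul2r (_ : 0 < N ^ s)); last by rewrite expn_gt0 N0.
apply: (@leq_ltn_trans (n ^ (t + t) * (N ^_ s * mm ^ s))).
  by rewrite -mulnA leq_mul2l ffact_ratio ?orbT.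
by rewrite mulnCA ltn_pmul2l.
Qed.
Lemma exists_free n t mm : t * t <= mm ->
  n ^ (t + t) * 'C('C(n, 2) - t * t, mm - t * t) < 'C('C(n, 2), mm) ->
  exists D0 : {set {set 'I_n}}, [/\ D0 \subset E2 n, #|D0| = mm & ~~ contains_subgraph (Ktt t) D0].
Proof.
move=> smm hlt.
set N := 'C(n, 2); set s := t * t.
pose S := [set D : {set {set 'I_n}} | (D \subset E2 n) && (#|D| == mm)].
have cS : #|S| = 'C(N, mm) by rewrite cards_draws card_E2.
pose X (f : {ffun 'I_(t + t) -> 'I_n}) : {set {set 'I_n}} := [set f @: e | e : {set 'I_(t + t)} in Ktt t].
pose Bf (f : {ffun 'I_(t + t) -> 'I_n}) := [set D in S | injectiveb f && (X f \subset D)].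
have bnd f : #|Bf f| <= 'C(N - s, mm - s).
  case: (boolP (injectiveb f)) => [/injectiveP finj | ninj]; last first.
    rewrite (_ : Bf f = set0) ?cards0 //; apply/setP => D; rewrite !inE.
    by rewrite (negbTE ninj) andbF.
  have cX : #|X f| = s by rewrite card_imset ?card_Ktt //; apply: imset_inj.
  have sX : X f \subset E2 n.
    apply/subsetP => y /imsetP [e /Ktt_mem [i [j ->]] ->].
    rewrite inE card_imset // cards2 eq_shift //.
  have inj : {in Bf f &, injective (fun D => D :\: X f)}.
    move=> D D'; rewrite !inE => /andP [_ /andP [_ sXD]] /andP [_ /andP [_ sXD']] E.
    apply/setP => y; case: (boolP (y \in X f)) => yX.
      by rewrite (subsetP sXD _ yX) (subsetP sXD' _ yX).
    by move/setP: E => /(_ y); rewrite !inE yX.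
  rewrite -(card_in_imset inj).
  apply: (@leq_trans #|[set D' : {set {set 'I_n}} | (D' \subset E2 n :\: X f) && (#|D'| == mm - s)]|).
    apply: subset_leq_card; apply/subsetP => y /imsetP [D].
    rewrite !inE => /andP [/andP [sD /eqP cD] /andP [_ sXD]] ->.
    rewrite setSD //= cardsD (setIidPr sXD) cD cX eqxx //.
  by rewrite cards_draws cardsD (setIidPr sX) cX card_E2.
case: (boolP [exists D in S, ~~ contains_subgraph (Ktt t) D]).
  move=> /exists_inP [D]; rewrite inE => /andP [sD /eqP cD] nc; by exists D.
move=> /exists_inP nex; exfalso.
have : #|S| <= \sum_f #|Bf f|.
  apply: card_cover => D DS.
  case: (boolP (contains_subgraph (Ktt t) D)) => [c | nc]; last first.
    by exfalso; apply: nex; exists D.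
  case/existsP: c => f /andP [finj /forall_inP fe]; exists f => //.
  rewrite inE DS finj /=; apply/subsetP => y /imsetP [e eK ->]; exact: fe.
move=> h; have : #|S| <= \sum_(f : {ffun 'I_(t + t) -> 'I_n}) 'C(N - s, mm - s).
  by apply: (leq_trans h); apply: leq_sum => f _; exact: bnd.
rewrite sum_nat_const card_ffun !card_ord cS => h2.
by have := leq_ltn_trans h2 hlt; rewrite ltnn.
Qed.

Lemma part2_nat n t mm : 0 < t -> t * t <= mm -> mm <= 'C(n, 2) ->
  n ^ 2 * mm ^ t < 'C(n, 2) ^ t -> M (Ktt t) n <= 2 ^ ('C(n, 2) - mm).
Proof.
move=> t0 smm mmN h.
have [D0 [sD0 cD0 nc]] := exists_free smm (binom_ineq t0 smm mmN h).
by rewrite -cD0; apply: M_upper.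
Qed.
Open Scope R_scope.

Lemma INR_muln a b : INR (a * b)%N = INR a * INR b.
Proof. by rewrite -multE mult_INR. Qed.

Lemma INR_expn m k : INR (m ^ k)%N = INR m ^ k.
Proof.
elim: k => [|k IH]; first by rewrite expn0.
by rewrite expnS INR_muln IH.
Qed.

Lemma INR_leq a b : (a <= b)%N -> INR a <= INR b.
Proof. by move/leP; apply: le_INR. Qed.

Lemma INR_ltn a b : (a < b)%N -> INR a < INR b.
Proof. by move/ltP; apply: lt_INR. Qed.

Lemma INR_subn a b : (b <= a)%N -> INR (a - b)%N = INR a - INR b.
Proof. by move/leP => h; rewrite -minusE minus_INR. Qed.

Lemma INR_leq_inv a b : INR a <= INR b -> (a <= b)%N.
Proof. by move/INR_le/leP. Qed.

Lemma INR_ltn_inv a b : INR a < INR b -> (a < b)%N.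
Proof. by move/INR_lt/ltP. Qed.

Lemma ln2_pos : 0 < ln 2.
Proof. have := ln_lt_2; lra. Qed.

Lemma ln_INR_expn m k : (0 < m)%N -> ln (INR (m ^ k)%N) = INR k * ln (INR m).
Proof. move=> m0; rewrite INR_expn ln_pow //; exact: (INR_ltn m0). Qed.

Lemma ln_1px x : 0 < x -> ln (1 + x) <= x.
Proof.
move=> x0; rewrite -[X in _ <= X]ln_exp; apply: ln_le; first lra.
have := exp_ineq1 x; lra.
Qed.

Lemma ev_max (P Q : nat -> Prop) : eventually P -> eventually Q -> eventually (fun n => P n /\ Q n).
Proof. move=> [N1 H1] [N2 H2]; exists (Nat.max N1 N2) => n h; split; [apply: H1|apply: H2]; lia. Qed.

Lemma ev_ge k : eventually (fun n => (k <= n)%N).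
Proof. exists k => n /leP //. Qed.

Lemma ev_mono (P Q : nat -> Prop) : (forall n, P n -> Q n) -> eventually P -> eventually Q.
Proof. move=> H [N HN]; exists N => n h; exact: H (HN n h). Qed.

Lemma evA (t : nat -> nat) : is_lim_seq (fun n => INR (t n) / log2 (INR n)) 0 ->
  forall k, (0 < k)%N -> eventually (fun n => (2 ^ (k * t n) < n)%N).
Proof.
move=> /is_lim_seq_spec hl k k0.
have kpos : 0 < / INR k by apply: Rinv_0_lt_compat; exact: (INR_ltn k0).
have [N HN] := hl (mkposreal _ kpos).
exists (Nat.max N 2) => n hn.
have n2 : (2 <= n)%N by apply/leP; lia.
have := HN n ltac:(lia); rewrite /= Rminus_0_r.
have nR : 2 <= INR n by apply: (INR_leq n2).
have lnn : 0 < ln (INR n) by rewrite -ln_1; apply: ln_increasing; lra.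
have l2 := ln2_pos.
have lg : 0 < log2 (INR n) by rewrite /log2; apply: Rdiv_lt_0_compat.
have tpos : 0 <= INR (t n) / log2 (INR n) by apply: Rdiv_le_0_compat => //; apply: pos_INR.
rewrite Rabs_pos_eq // => h.
have h2 : INR (k * t n)%N < log2 (INR n).
  rewrite INR_muln.
  have kR : 0 < INR k by exact: (INR_ltn k0).
  set u := INR (t n) / log2 (INR n) in h tpos *.
  have eu : INR (t n) = u * log2 (INR n) by rewrite /u; field; lra.
  have ku : INR k * u < 1.
    have := Rmult_lt_compat_l (INR k) _ _ kR h; rewrite Rinv_r; lra.
  rewrite eu; nra.
apply: INR_ltn_inv; apply: ln_lt_inv.
- apply: (INR_ltn (a:=0)); by rewrite expn_gt0.
- lra.
rewrite ln_INR_expn //.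
move: h2; rewrite /log2 => h2.
have := Rmult_lt_compat_r (ln 2) _ _ l2 h2.
rewrite /Rdiv Rmult_assoc Rinv_l; last lra.
rewrite Rmult_1_r; have -> : INR 2 = 2 by []; done.
Qed.
Lemma evB (t : nat -> nat) : is_lim_seq (fun n => INR (t n) / log2 (INR n)) 0 ->
  forall k, (0 < k)%N -> eventually (fun n => (k * 2 ^ (k * t n) <= n)%N).
Proof.
move=> hl k k0.
have k20 : (0 < 2 * k)%N by lia.
apply: ev_mono (ev_max (evA hl k20) (ev_ge (k * k))).
move=> n [h1 h2].
set x := (2 ^ (k * t n))%N.
have ex : (2 ^ (2 * k * t n) = x * x)%N by rewrite -expnD; congr (2 ^ _)%N; lia.
rewrite ex in h1.
case: (leqP k x) => kx.
  apply: leq_trans (ltnW h1); by rewrite leq_mul2r kx orbT.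
apply: leq_trans h2; apply: ltnW; by rewrite ltn_mul2l kx andbT.
Qed.

Lemma evC (t : nat -> nat) : is_lim_seq (fun n => INR (t n) / log2 (INR n)) 0 ->
  forall a, eventually (fun n => (4 * 2 ^ a * (t n + 1) <= n)%N /\
                               (2 * 2 ^ a * t n * (4 * 2 ^ a) ^ t n < n)%N).
Proof.
move=> hl a.
set K := (2 ^ (a + 2) + a + 3)%N.
have K0 : (0 < K)%N by rewrite /K; lia.
apply: ev_mono (evB hl K0) => n h.
set tt := t n in h *.
have e4 : (4 * 2 ^ a = 2 ^ (a + 2))%N by rewrite expnD mulnC.
have e2 : (2 * 2 ^ a * 2 = 2 ^ (a + 2))%N by rewrite expnD; lia.
have f1 : (2 ^ (a + 2) <= K)%N by rewrite /K; lia.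
have f2 : (tt < 2 ^ tt)%N by apply: ltn_expl.
have f3 : (2 ^ tt * (4 * 2 ^ a) ^ tt <= 2 ^ (K * tt))%N.
  rewrite e4 -expnM -expnD; apply: leq_pexp2l => //; rewrite /K; nia.
have f4 : (2 ^ tt <= 2 ^ (K * tt))%N by apply: leq_pexp2l => //; nia.
have f5 : (0 < (4 * 2 ^ a) ^ tt)%N by rewrite expn_gt0; lia.
set P := (2 ^ a)%N in e4 e2 f3 f5 *.
set Y := ((4 * P) ^ tt)%N in f3 f5 *.
set T2 := (2 ^ tt)%N in f2 f3 f4 *.
set Z := (2 ^ (K * tt))%N in h f3 f4 *.
set A2 := (2 ^ (a + 2))%N in e4 e2 f1.
split.
  apply: leq_trans h; rewrite e4; apply: leq_mul => //; lia.
apply: leq_trans h.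
apply: (@leq_ltn_trans (2 * P * T2 * Y - 1)); first nia.
have : (2 * P * T2 * Y <= 2 * P * 2 * Z)%N by nia.
nia.
Qed.
Lemma INR_pos_of a : (0 < a)%N -> 0 < INR a.
Proof. move=> h; exact: (INR_ltn h). Qed.

Lemma ratio_lower (N m j Mv : nat) : (1 <= N)%N -> (m <= N)%N -> (m * (2 ^ j * 2 ^ j) <= N)%N ->
  (2 ^ N * (2 ^ j) ^ (N - m) <= Mv * (2 ^ j).+1 ^ N)%N ->
  1 - 3 / INR (2 ^ j)%N <= log2 (INR Mv) / INR N.
Proof.
move=> N1 mN hm h.
have q0 : (0 < 2 ^ j)%N by rewrite expn_gt0.
have M0 : (0 < Mv)%N.
  case: Mv h => [|//]; rewrite mul0n leqn0 muln_eq0 !expn_eq0 /=; lia.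
have hR := INR_leq h.
rewrite !INR_muln in hR.
have A0 : (0 < 2 ^ N)%N by rewrite expn_gt0.
have B0 : (0 < (2 ^ j) ^ (N - m))%N by rewrite expn_gt0 q0.
have C0 : (0 < (2 ^ j).+1 ^ N)%N by rewrite expn_gt0.
have lnh := ln_le _ _ (Rmult_lt_0_compat _ _ (INR_pos_of A0) (INR_pos_of B0)) hR.
rewrite (ln_mult _ _ (INR_pos_of A0) (INR_pos_of B0)) in lnh.
rewrite (ln_mult _ _ (INR_pos_of M0) (INR_pos_of C0)) in lnh.
rewrite !ln_INR_expn // in lnh.
set Q := INR (2 ^ j)%N in lnh *.
have eQ : Q = 2 ^ j by rewrite /Q INR_expn.
have Q1 : 1 <= Q by rewrite eQ; apply: pow_R1_Rle; lra.
have lQ : ln Q = INR j * ln 2 by rewrite eQ ln_pow; [done | lra].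
have eS : INR (2 ^ j).+1 = Q * (1 + / Q) by rewrite S_INR -/Q; field; lra.
have lS : ln (INR (2 ^ j).+1) <= ln Q + / Q.
  rewrite eS ln_mult; [|lra|]; last by have := Rinv_0_lt_compat Q ltac:(lra); lra.
  have := ln_1px (Rinv_0_lt_compat Q ltac:(lra)); lra.
have jQ : INR j <= Q.
  rewrite /Q; apply: INR_leq; exact: ltnW (ltn_expl _ _).
have hmR := INR_leq hm; rewrite !INR_muln -/Q in hmR.
rewrite INR_subn // in lnh.
set NR := INR N in lnh hmR *; set mR := INR m in lnh hmR *.
set X := ln (INR Mv) in lnh *.
have NR1 : 1 <= NR by rewrite /NR; have := INR_leq N1; done.
have l2 := ln_lt_2.
set l2v := ln 2 in lnh lQ l2 *.
have INR2 : INR 2 = 2 by [].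
try rewrite INR2 -/l2v in lnh.
rewrite lQ in lS.
set iQ := / Q in lS *.
have QiQ : Q * iQ = 1 by rewrite /iQ Rinv_r; lra.
have iQ0 : 0 < iQ by rewrite /iQ; apply: Rinv_0_lt_compat; lra.
have hX : NR * l2v - mR * INR j * l2v - NR * iQ <= X.
  have : NR * ln (INR (2 ^ j).+1) <= NR * (INR j * l2v + iQ).
    apply: Rmult_le_compat_l; lra.
  nra.
have hmj : mR * INR j <= NR * iQ.
  have mR0 : 0 <= mR by apply: pos_INR.
  have : mR * INR j * (Q * Q) <= NR * iQ * (Q * Q).
    have -> : NR * iQ * (Q * Q) = NR * Q by rewrite /iQ; field; lra.
    have a1 : mR * INR j * (Q * Q) <= mR * Q * (Q * Q).
      apply: Rmult_le_compat_r; first nra.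
      apply: Rmult_le_compat_l; lra.
    have a2 : mR * Q * (Q * Q) = (mR * (Q * Q)) * Q by ring.
    have a3 : (mR * (Q * Q)) * Q <= NR * Q by apply: Rmult_le_compat_r; lra.
    lra.
  move=> h1; apply: (Rmult_le_reg_r (Q * Q)); nra.
rewrite /log2 -/X -/l2v.
have l2p : 0 < l2v by lra.
apply: (Rmult_le_reg_r (NR * l2v)); first nra.
have -> : X / l2v / NR * (NR * l2v) = X by field; lra.
have -> : (1 - 3 / Q) * (NR * l2v) = NR * l2v - 3 * (NR * l2v * iQ) by rewrite /iQ; field; lra.
have b1 : mR * INR j * l2v <= NR * iQ * l2v by apply: Rmult_le_compat_r; lra.
have b0 : 0 <= NR * iQ by nra.
have b2 : NR * iQ <= 2 * (NR * iQ * l2v) by nra.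
lra.
Qed.

Lemma ratio_upper (n : nat) m (L : {set {set 'I_m}}) : (2 <= n)%N -> (1 <= M L n)%N ->
  log2 (INR (M L n)) / INR 'C(n, 2) <= 1.
Proof.
move=> n2 M1.
have N1 : (1 <= 'C(n, 2))%N by rewrite bin_gt0.
have NR : 0 < INR 'C(n, 2) by apply: INR_pos_of.
have h := INR_leq (M_le_pow n L).
have := ln_le _ _ (INR_pos_of M1) h.
rewrite ln_INR_expn // => h2.
rewrite /log2; have l2 := ln2_pos.
apply: (Rmult_le_reg_r (INR 'C(n, 2) * ln 2)); first nra.
have -> : ln (INR (M L n)) / ln 2 / INR 'C(n, 2) * (INR 'C(n, 2) * ln 2) = ln (INR (M L n)) by field; lra.
have e2 : ln (INR 2) = ln 2 by []. rewrite e2 in h2; lra.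
Qed.
Lemma M_pos n m (L : {set {set 'I_m}}) : (1 <= M L n)%N.
Proof.
have a : admissible L [set (set0 : {set {set 'I_n}})].
  apply/andP; split.
    by apply/forall_inP => G; rewrite inE => /eqP ->; rewrite is_graphE sub0set.
  apply/forall_inP => G; rewrite inE => /eqP ->.
  by apply/forall_inP => G'; rewrite inE => /eqP ->; rewrite eqxx.
by have := M_ge a; rewrite cards1.
Qed.

Lemma exists_j (eps : R) : 0 < eps -> exists j : nat, 3 / INR (2 ^ j)%N < eps.
Proof.
move=> e0.
have x0 : 0 <= 3 / eps by apply: Rlt_le; apply: Rdiv_lt_0_compat; lra.
case: (nfloor_ex _ x0) => k [_ hk].
exists k.+1.
have hj : INR k.+1 <= INR (2 ^ k.+1)%N by apply: INR_leq; apply: ltnW; apply: ltn_expl.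
rewrite S_INR in hj.
have Q0 : 0 < INR (2 ^ k.+1)%N by lra.
have : 3 / eps < INR (2 ^ k.+1)%N by lra.
move=> h; apply: (Rmult_lt_reg_r (INR (2 ^ k.+1)%N)) => //.
have -> : 3 / INR (2 ^ k.+1)%N * INR (2 ^ k.+1)%N = 3 by field; lra.
have := Rmult_lt_compat_l eps _ _ e0 h.
have -> : eps * (3 / eps) = 3 by field; lra.
lra.
Qed.

Lemma part1 (t : nat -> nat) : is_lim_seq (fun n => INR (t n) / log2 (INR n)) 0 ->
  is_lim_seq (ratio t) 1.
Proof.
move=> hl; apply/is_lim_seq_spec => eps.
have [j hj] := exists_j (cond_pos eps).
apply: ev_mono (ev_max (evC hl (j + j)) (ev_ge 2)) => n [[h1 h2] n2].
have hn := part1_nat j h1 h2.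
have N1 : (1 <= 'C(n, 2))%N by rewrite bin_gt0.
have lo := ratio_lower N1 (leq_div _ _) (ltac:(rewrite -expnD; apply: leq_divM)) hn.
have up := ratio_upper n2 (M_pos n (Ktt (t n))).
rewrite /ratio; rewrite Rabs_left1; lra.
Qed.
Lemma ln_lt_self y : 0 < y -> ln y < y.
Proof.
move=> y0; rewrite -[X in _ < X](ln_exp y); apply: ln_increasing => //.
have := exp_ineq1 y; have : y <> 0 by lra. move=> h /(_ h); lra.
Qed.

Lemma ln_lt_sqrt y : 0 < y -> ln y < 2 * sqrt y.
Proof.
move=> y0; have s0 : 0 < sqrt y by apply: sqrt_lt_R0.
have -> : ln y = 2 * ln (sqrt y).
  rewrite -{1}(sqrt_sqrt y) ?ln_mult //; lra.
have := ln_lt_self s0; lra.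
Qed.

Lemma ratio_le (Mv N m : nat) : (1 <= Mv)%N -> (Mv <= 2 ^ (N - m))%N -> (m <= N)%N -> (0 < N)%N ->
  log2 (INR Mv) / INR N <= 1 - INR m / INR N.
Proof.
move=> M1 hM mN N0.
have NR := INR_pos_of N0.
have := ln_le _ _ (INR_pos_of M1) (INR_leq hM).
rewrite ln_INR_expn // INR_subn // => h.
have e2 : ln (INR 2) = ln 2 by []. rewrite e2 in h.
have l2 := ln2_pos.
rewrite /log2.
apply: (Rmult_le_reg_r (INR N * ln 2)); first nra.
have -> : ln (INR Mv) / ln 2 / INR N * (INR N * ln 2) = ln (INR Mv) by field; lra.
have -> : (1 - INR m / INR N) * (INR N * ln 2) = (INR N - INR m) * ln 2 by field; lra.
lra.
Qed.

Lemma NR_formula n : (1 <= n)%N -> INR 'C(n, 2) = INR n * (INR n - 1) / 2.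
Proof.
move=> n1.
have h := congr1 INR (bin2_double n).
rewrite !INR_muln in h.
have e1 : INR n.-1 = INR n - 1 by rewrite -subn1 INR_subn.
have e2 : INR 2 = 2 by [].
rewrite e1 e2 in h; lra.
Qed.
Lemma part2_n (n tn : nat) (p c eps : R) : 0 < p -> p < 1 -> 0 < eps -> 0 <= c -> (2 <= n)%N ->
  2 * ln (INR n) < INR tn * (- ln p) -> INR tn < (c + 1) * log2 (INR n) ->
  (64 * (c + 1) ^ 2 + 4) / p <= INR n -> 2 / eps <= INR n - 1 ->
  log2 (INR (M (Ktt tn) n)) / INR 'C(n, 2) <= 1 - p + eps / 2.
Proof.
move=> p0 p1 e0 c0 n2 hlow hup hK he.
have nR : 2 <= INR n by apply: (INR_leq n2).
have NRe : INR 'C(n, 2) = INR n * (INR n - 1) / 2 by apply: NR_formula; lia.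
set NR := INR 'C(n, 2) in NRe *.
have NR0 : 0 < NR by rewrite NRe; nra.
have N0 : (0 < 'C(n, 2))%N by rewrite bin_gt0.
have lnn : 0 < ln (INR n) by rewrite -ln_1; apply: ln_increasing; lra.
have lnp0 : ln p < 0 by rewrite -ln_1; apply: ln_increasing; lra.
have T0 : 0 < INR tn by nra.
have t0 : (0 < tn)%N by case: tn T0 {hlow hup} => [|//]; rewrite /=; lra.
have hsmall : INR n ^ 2 * p ^ tn < 1.
  apply: ln_lt_inv; [apply: Rmult_lt_0_compat; apply: pow_lt; lra | lra |].
  rewrite ln_1 ln_mult; try (apply: pow_lt; lra).
  rewrite !ln_pow; try lra.
  have -> : INR 2 = 2 by []. nra.
have pN0 : 0 <= p * NR by nra.
case: (nfloor_ex _ pN0) => m [hm1 hm2].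
have mN : (m <= 'C(n, 2))%N by apply: INR_leq_inv; rewrite -/NR; nra.
have hc : (n ^ 2 * m ^ tn < 'C(n, 2) ^ tn)%N.
  apply: INR_ltn_inv; rewrite !INR_muln !INR_expn -/NR.
  have a1 : INR m ^ tn <= (p * NR) ^ tn by apply: pow_incr; split; [apply: pos_INR | lra].
  rewrite Rpow_mult_distr in a1.
  have a2 : 0 < NR ^ tn by apply: pow_lt.
  have a3 : 0 < INR n ^ 2 by apply: pow_lt; lra.
  have a4 : INR n ^ 2 * INR m ^ tn <= INR n ^ 2 * (p ^ tn * NR ^ tn) by apply: Rmult_le_compat_l; lra.
  have a5 : INR n ^ 2 * (p ^ tn * NR ^ tn) = (INR n ^ 2 * p ^ tn) * NR ^ tn by ring.
  have a6 : (INR n ^ 2 * p ^ tn) * NR ^ tn < 1 * NR ^ tn by apply: Rmult_lt_compat_r.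
  lra.
have htt : (tn * tn <= m)%N.
  have l2 := ln_lt_2.
  have hlg : log2 (INR n) < 2 * ln (INR n).
    rewrite /log2; apply: (Rmult_lt_reg_r (ln 2)); first lra.
    have -> : ln (INR n) / ln 2 * ln 2 = ln (INR n) by field; lra.
    nra.
  have hs := ln_lt_sqrt (ltac:(lra) : 0 < INR n).
  have sq := sqrt_sqrt (INR n) ltac:(lra).
  have s0 : 0 <= sqrt (INR n) by apply: sqrt_pos.
  have hT : INR tn < 4 * (c + 1) * sqrt (INR n) by nra.
  have hT2 : INR tn * INR tn < 16 * (c + 1) ^ 2 * INR n by nra.
  have hK' : 64 * (c + 1) ^ 2 + 4 <= p * INR n.
    have := Rmult_le_compat_r p _ _ (ltac:(lra)) hK.
    have -> : (64 * (c + 1) ^ 2 + 4) / p * p = 64 * (c + 1) ^ 2 + 4 by field; lra.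
    lra.
  have hpN : 16 * (c + 1) ^ 2 * INR n + 1 <= p * NR.
    rewrite NRe; nra.
  have : INR (tn * tn)%N < INR m.+1 by rewrite INR_muln S_INR; lra.
  by move/INR_ltn_inv.
have hM := part2_nat t0 htt mN hc.
have r1 := ratio_le (M_pos n (Ktt tn)) hM mN N0.
rewrite -/NR in r1.
have b1 : INR m / NR >= p - 1 / NR.
  apply: Rle_ge; apply: (Rmult_le_reg_r NR) => //.
  have -> : INR m / NR * NR = INR m by field; lra.
  have -> : (p - 1 / NR) * NR = p * NR - 1 by field; lra.
  lra.
have b2 : 1 / NR <= eps / 2.
  have hN : 2 / eps <= NR by rewrite NRe; nra.
  apply: (Rmult_le_reg_r (NR * 2 / eps)); first by apply: Rdiv_lt_0_compat; lra.
  have -> : 1 / NR * (NR * 2 / eps) = 2 / eps by field; lra.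
  have -> : eps / 2 * (NR * 2 / eps) = NR by field; lra.
  lra.
lra.
Qed.
Lemma part2 (c : R) (t : nat -> nat) : 0 < c ->
  is_lim_seq (fun n => INR (t n) / log2 (INR n)) c ->
  Rbar_le (LimSup_seq (ratio t)) (1 - Rpower 2 (- (2 / c))).
Proof.
move=> c0 hl.
set L := Rpower 2 (- (2 / c)).
have L0 : 0 < L by rewrite /L /Rpower; apply: exp_pos.
have c20 : 0 < 2 / c by apply: Rdiv_lt_0_compat; lra.
have L1 : L < 1.
  have := Rpower_lt 2 (- (2 / c)) 0 ltac:(lra) ltac:(lra).
  by rewrite Rpower_O; [rewrite -/L | lra].
have key : forall eps, 0 < eps -> eventually (fun n => ratio t n <= 1 - L + eps).
  move=> eps e0.
  case: (Rle_lt_dec L eps) => hle.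
    apply: ev_mono (ev_ge 2) => n n2.
    have := ratio_upper n2 (M_pos n (Ktt (t n))); rewrite /ratio; lra.
  set p := L - eps / 2.
  have p0 : 0 < p by rewrite /p; lra.
  have p1 : p < 1 by rewrite /p; lra.
  have lnL : ln L = - (2 / c) * ln 2 by rewrite /L ln_Rpower.
  have lnpL : ln p < ln L by apply: ln_increasing => //; rewrite /p; lra.
  have l2 := ln2_pos.
  have lnL0 : ln L < 0 by rewrite lnL; nra.
  set c2 := 2 * ln 2 / (- ln p).
  have c2pos : 0 < c2 by apply: Rdiv_lt_0_compat; lra.
  have c2lt : c2 < c.
    apply: (Rmult_lt_reg_r (- ln p)); first lra.
    have -> : c2 * - ln p = 2 * ln 2 by rewrite /c2; field; lra.
    have e : c * - ln L = 2 * ln 2 by rewrite lnL; field; lra.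
    nra.
  set dl := Rmin (c - c2) 1.
  have dl0 : 0 < dl by apply: Rmin_pos; lra.
  have dl1 : dl <= c - c2 by apply: Rmin_l.
  have dl2 : dl <= 1 by apply: Rmin_r.
  move/is_lim_seq_spec: hl => /(_ (mkposreal _ dl0)) hl.
  have K0pos : 0 <= (64 * (c + 1) ^ 2 + 4) / p.
    apply: Rlt_le; apply: Rdiv_lt_0_compat => //; nra.
  have K1pos : 0 <= 2 / eps + 1.
    have : 0 < 2 / eps by apply: Rdiv_lt_0_compat; lra. lra.
  case: (nfloor_ex _ K0pos) => k0 [_ hk0].
  case: (nfloor_ex _ K1pos) => k1 [_ hk1].
  apply: ev_mono (ev_max hl (ev_max (ev_ge 2) (ev_max (ev_ge k0.+1) (ev_ge k1.+1)))).
  move=> n [/= hr [n2 [nk0 nk1]]].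
  have nR : 2 <= INR n by apply: (INR_leq n2).
  have hk0' : (64 * (c + 1) ^ 2 + 4) / p <= INR n.
    have := INR_leq nk0; rewrite S_INR; lra.
  have hk1' : 2 / eps <= INR n - 1.
    have := INR_leq nk1; rewrite S_INR; lra.
  have lnn : 0 < ln (INR n) by rewrite -ln_1; apply: ln_increasing; lra.
  have lg : 0 < log2 (INR n) by rewrite /log2; apply: Rdiv_lt_0_compat.
  set r := INR (t n) / log2 (INR n) in hr.
  have er : INR (t n) = r * log2 (INR n) by rewrite /r; field; lra.
  have hr' : c2 < r /\ r < c + 1.
    have [h1 h2] := Rabs_def2 _ _ hr; split; lra.
  case: hr' => hr1 hr2.
  have hlow : 2 * ln (INR n) < INR (t n) * - ln p.
    have e2 : c2 * log2 (INR n) * - ln p = 2 * ln (INR n).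
      by rewrite /c2 /log2; field; lra.
    rewrite er; nra.
  have hup : INR (t n) < (c + 1) * log2 (INR n) by rewrite er; nra.
  have := part2_n p0 p1 e0 (ltac:(lra) : 0 <= c) n2 hlow hup hk0' hk1'.
  rewrite /ratio /p; lra.
have H : forall eps, 0 < eps -> Rbar_le (LimSup_seq (ratio t)) (1 - L + eps).
  move=> eps e0; rewrite -(LimSup_seq_const (1 - L + eps)); apply: LimSup_le; exact: key.
case E: (LimSup_seq (ratio t)) => [x| |]; rewrite E in H => //=.
  apply: Rle_plus_epsilon => eps e0; have := H eps e0; rewrite /=; lra.
by have := H 1 Rlt_0_1.
Qed.

Theorem theorem1p5 :
  (forall t : nat -> nat,
     is_lim_seq (fun n => Rdiv (INR (t n)) (log2 (INR n))) (Rbar.Finite R0) ->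
     is_lim_seq (ratio t) (Rbar.Finite R1))
  /\
  (forall (c : R) (t : nat -> nat), Rlt R0 c ->
     is_lim_seq (fun n => Rdiv (INR (t n)) (log2 (INR n))) (Rbar.Finite c) ->
     Rbar_le (LimSup_seq (ratio t))
             (Rbar.Finite (Rminus R1 (Rpower (IZR 2) (Ropp (Rdiv (IZR 2) c)))))).
Proof.
split.
  move=> t hl; exact: part1 hl.
move=> c t c0 hl; exact: part2 c0 hl.
Qed.
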